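(* Let $(\mathcal{S},\widehat{\mathcal{S}},\sigma,\tau,\iota)$ be a duplicated category of sets. Then for every object $X$ of $\mathcal{S}$ the component $\iota_X:\sigma(X)\to\tau(X)$ is a monomorphism in $\widehat{\mathcal{S}}$.
   Context: A duplicated category of sets is a quintet $(\mathcal{S},\widehat{\mathcal{S}},\sigma,\tau,\iota)$ such that: (i) $\mathcal{S}$ and $\widehat{\mathcal{S}}$ are categories satisfying Lawvere's axioms of the Elementary Theory of the Category of Sets (ETCS), i.e. each is a well-pointed topos with a natural numbers object satisfying the axiom of choice; (ii) $\sigma:\mathcal{S}\to\widehat{\mathcal{S}}$ is a functor preserving all finite limits, the subobject classifier $2$, exponentials and natural numbers objects; (iii) $\tau:\mathcal{S}\to\widehat{\mathcal{S}}$ is a functor preserving all finite limits; (iv) $\iota:\sigma\to\tau$ is a natural transformation such that $\iota_X=\mathrm{id}_{\sigma(X)}=\mathrm{id}_{\tau(X)}$ for every finite object $X$ of $\mathcal{S}$. *)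

(* Defs.v *)
Set Implicit Arguments.
Unset Strict Implicit.

(** * Categories (equality of morphisms is Leibniz equality) *)
Record Category := {
  Ob :> Type;
  Hom : Ob -> Ob -> Type;
  idm : forall A, Hom A A;
  comp : forall A B C, Hom B C -> Hom A B -> Hom A C;
  comp_id_l : forall A B (f : Hom A B), comp (idm B) f = f;
  comp_id_r : forall A B (f : Hom A B), comp f (idm A) = f;
  comp_assoc : forall A B C D (h : Hom C D) (g : Hom B C) (f : Hom A B),
      comp h (comp g f) = comp (comp h g) f
}.
Arguments Hom {c} _ _.
Arguments idm {c} A.
Arguments comp {c A B C} _ _.

Notation "g ∘ f" := (comp g f) (at level 40, left associativity).

Section Elementary.
Variable C : Category.

Definition mono {A B : C} (m : Hom A B) : Prop :=
  forall Z (x y : Hom Z A), m ∘ x = m ∘ y -> x = y.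

Definition epi {A B : C} (e : Hom A B) : Prop :=
  forall Z (x y : Hom B Z), x ∘ e = y ∘ e -> x = y.

Definition is_iso {A B : C} (f : Hom A B) : Prop :=
  exists g : Hom B A, g ∘ f = idm A /\ f ∘ g = idm B.

Definition is_terminal (T : C) : Prop :=
  forall A : C, exists f : Hom A T, forall g : Hom A T, g = f.

Definition is_initial (I : C) : Prop :=
  forall A : C, exists f : Hom I A, forall g : Hom I A, g = f.

Definition is_product (A B P : C) (p1 : Hom P A) (p2 : Hom P B) : Prop :=
  forall Z (f : Hom Z A) (g : Hom Z B),
    exists! h : Hom Z P, p1 ∘ h = f /\ p2 ∘ h = g.

Definition is_equalizer (A B E : C) (f g : Hom A B) (e : Hom E A) : Prop :=
  f ∘ e = g ∘ e /\
  forall Z (h : Hom Z A), f ∘ h = g ∘ h -> exists! k : Hom Z E, e ∘ k = h.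

Definition is_pullback (P A B X : C) (p1 : Hom P A) (p2 : Hom P B)
    (f : Hom A X) (g : Hom B X) : Prop :=
  f ∘ p1 = g ∘ p2 /\
  forall Z (h : Hom Z A) (k : Hom Z B), f ∘ h = g ∘ k ->
    exists! u : Hom Z P, p1 ∘ u = h /\ p2 ∘ u = k.

Definition has_finite_limits : Prop :=
  (exists T : C, is_terminal T) /\
  (forall A B : C, exists P (p1 : Hom P A) (p2 : Hom P B), is_product p1 p2) /\
  (forall (A B : C) (f g : Hom A B), exists E (e : Hom E A), is_equalizer f g e).

(** [E] is the exponential [B^A], with [P] (projections [p1],[p2]) a product
    [E x A] and evaluation [ev : P -> B]. *)
Definition is_exponential (A B E P : C) (p1 : Hom P E) (p2 : Hom P A)
    (ev : Hom P B) : Prop :=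
  is_product p1 p2 /\
  forall Z Q (q1 : Hom Q Z) (q2 : Hom Q A), is_product q1 q2 ->
  forall f : Hom Q B,
    exists! g : Hom Z E,
      forall h : Hom Q P, p1 ∘ h = g ∘ q1 -> p2 ∘ h = q2 -> ev ∘ h = f.

Definition has_exponentials : Prop :=
  forall A B : C, exists E P (p1 : Hom P E) (p2 : Hom P A) (ev : Hom P B),
    is_exponential p1 p2 ev.

Definition is_subobject_classifier (One Omega : C) (tru : Hom One Omega) : Prop :=
  is_terminal One /\
  forall A X (m : Hom A X), mono m ->
    exists! chi : Hom X Omega, forall t : Hom A One, is_pullback m t chi tru.

Definition is_NNO (One N : C) (z : Hom One N) (s : Hom N N) : Prop :=
  is_terminal One /\
  forall A (a : Hom One A) (f : Hom A A),
    exists! u : Hom N A, u ∘ z = a /\ u ∘ s = f ∘ u.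

Definition is_topos : Prop :=
  has_finite_limits /\ has_exponentials /\
  exists One Omega (tru : Hom One Omega), is_subobject_classifier tru.

Definition well_pointed : Prop :=
  forall One : C, is_terminal One ->
    (forall (A B : C) (f g : Hom A B),
        (forall x : Hom One A, f ∘ x = g ∘ x) -> f = g) /\
    ~ is_initial One.

Definition has_NNO : Prop :=
  exists One N (z : Hom One N) (s : Hom N N), is_NNO z s.

Definition choice_axiom : Prop :=
  forall (A B : C) (e : Hom A B), epi e -> exists s : Hom B A, e ∘ s = idm B.

Definition ETCS : Prop :=
  is_topos /\ well_pointed /\ has_NNO /\ choice_axiom.

(** Finite object (Dedekind finiteness; equivalent to the usual notion in
    ETCS). *)
Definition finite_obj (X : C) : Prop :=
  forall m : Hom X X, mono m -> is_iso m.

End Elementary.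

Arguments mono {C A B} m.
Arguments epi {C A B} e.
Arguments is_iso {C A B} f.

Record Functor (C D : Category) := {
  Fob :> Ob C -> Ob D;
  Fhom : forall A B : C, Hom A B -> Hom (Fob A) (Fob B);
  Fhom_id : forall A : C, Fhom (idm A) = idm (Fob A);
  Fhom_comp : forall (A B E : C) (g : Hom B E) (f : Hom A B),
      Fhom (g ∘ f) = Fhom g ∘ Fhom f
}.
Arguments Fhom {C D} f {A B} _ : rename.

Record NatTrans (C D : Category) (F G : Functor C D) := {
  ncomp :> forall A : C, Hom (F A) (G A);
  naturality : forall (A B : C) (f : Hom A B),
      Fhom G f ∘ ncomp A = ncomp B ∘ Fhom F f
}.
Arguments ncomp {C D F G} n A : rename.

Section Preservation.
Variables (C D : Category) (F : Functor C D).

Definition preserves_terminal : Prop :=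
  forall T : C, is_terminal T -> is_terminal (F T).

Definition preserves_products : Prop :=
  forall (A B P : C) (p1 : Hom P A) (p2 : Hom P B),
    is_product p1 p2 -> is_product (Fhom F p1) (Fhom F p2).

Definition preserves_equalizers : Prop :=
  forall (A B E : C) (f g : Hom A B) (e : Hom E A),
    is_equalizer f g e -> is_equalizer (Fhom F f) (Fhom F g) (Fhom F e).

Definition preserves_finite_limits : Prop :=
  preserves_terminal /\ preserves_products /\ preserves_equalizers.

Definition preserves_subobject_classifier : Prop :=
  forall (One Omega : C) (tru : Hom One Omega),
    is_subobject_classifier tru -> is_subobject_classifier (Fhom F tru).

Definition preserves_exponentials : Prop :=
  forall (A B E P : C) (p1 : Hom P E) (p2 : Hom P A) (ev : Hom P B),
    is_exponential p1 p2 ev ->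
    is_exponential (Fhom F p1) (Fhom F p2) (Fhom F ev).

Definition preserves_NNO : Prop :=
  forall (One N : C) (z : Hom One N) (s : Hom N N),
    is_NNO z s -> is_NNO (Fhom F z) (Fhom F s).

End Preservation.

Definition duplicated_category_of_sets (S Sh : Category)
    (sigma tau : Functor S Sh) (iota : NatTrans sigma tau) : Prop :=
  ETCS S /\ ETCS Sh /\
  (preserves_finite_limits sigma /\ preserves_subobject_classifier sigma /\
   preserves_exponentials sigma /\ preserves_NNO sigma) /\
  preserves_finite_limits tau /\
  (forall X : S, finite_obj X ->
     exists e : sigma X = tau X,
       iota X = eq_rect (sigma X) (fun Y => Hom (sigma X) Y) (idm (sigma X)) (tau X) e).

(* Main.v *)
Require Import Defs.
From Stdlib Require Import Classical.

Section Aux.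
Variable C : Category.

Lemma term_uniq (T : C) : is_terminal T -> forall A (f g : Hom A T), f = g.
Proof. intros HT A f g. destruct (HT A) as [h Hh]. rewrite (Hh f), (Hh g). reflexivity. Qed.

Arguments term_uniq {T} _ {A}.
Lemma cast_mono (A B : C) (e : A = B) (f : Hom A B) :
  f = eq_rect A (fun Y => Hom A Y) (idm A) B e -> mono f.
Proof.
  destruct e. simpl. intros ->. intros Z x y H.
  rewrite !comp_id_l in H. exact H.
Qed.

Lemma omega_finite : well_pointed C -> has_finite_limits C ->
  forall (One Om : C) (tru : Hom One Om), is_subobject_classifier tru ->
  finite_obj Om.
Proof.
  intros wp [_ [_ Heq]] One Om tru [HOne Hcl].
  destruct (wp One HOne) as [sep _].
  assert (key : forall p : Hom One Om, p <> tru -> forall q, q <> tru -> p = q).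
  { intros p Hp q Hq.
    destruct (Heq _ _ p tru) as [E [e [Hee Heu]]].
    assert (Hme : mono e).
    { intros Z x y _.
      assert (Hx : p ∘ (e ∘ x) = tru ∘ (e ∘ x)) by (rewrite !comp_assoc, Hee; reflexivity).
      destruct (Heu Z _ Hx) as [v [_ Hv]].
      transitivity v; [symmetry; apply Hv; reflexivity|].
      apply Hv. apply (term_uniq HOne). }
    assert (Hpt : forall (Z : C) (h : Hom Z One) (r : Hom One Om), r <> tru ->
              (exists k : Hom Z One, r ∘ h = tru ∘ k) -> forall z : Hom One Z, False).
    { intros Z h r Hr [k Hk] z. apply Hr.
      rewrite <- (comp_id_r r), <- (comp_id_r tru).
      rewrite (term_uniq HOne (idm One) (h ∘ z)) at 1.
      rewrite (term_uniq HOne (idm One) (k ∘ z)).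
      rewrite !comp_assoc, Hk. reflexivity. }
    assert (Hnp : forall z : Hom One E, False).
    { apply (Hpt E e p Hp). exists e. exact Hee. }
    assert (good : forall r, r <> tru -> forall t : Hom E One, is_pullback e t r tru).
    { intros r Hr t. split.
      - apply sep. intros z. destruct (Hnp z).
      - intros Z h k Hk.
        assert (Hph : p ∘ h = tru ∘ h).
        { apply sep. intros z. destruct (Hpt Z h r Hr (ex_intro _ k Hk) z). }
        destruct (Heu Z h Hph) as [v [Hv Hvu]].
        exists v. split.
        + split; [exact Hv | apply (term_uniq HOne)].
        + intros u [Hu _]. apply Hvu. exact Hu. }
    destruct (Hcl E One e Hme) as [chi [_ Hu]].
    rewrite <- (Hu p (good p Hp)). apply Hu. exact (good q Hq). }
  intros m Hm. exists m.
  assert (Hmm : m ∘ m = idm Om).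
  { apply sep. intros x. rewrite comp_id_l, <- comp_assoc.
    destruct (classic (m ∘ (m ∘ x) = x)) as [H|H]; [exact H|exfalso].
    assert (Hxy : m ∘ x <> x).
    { intros E. apply H. rewrite E. exact E. }
    assert (Hyw : m ∘ (m ∘ x) <> m ∘ x).
    { intros E. apply Hxy. apply (Hm One). exact E. }
    set (y := m ∘ x) in *. set (w := m ∘ y) in *.
    destruct (classic (x = tru)) as [Hx|Hx].
    - apply Hyw. apply key; intros E; [apply H | apply Hxy]; congruence.
    - destruct (classic (y = tru)) as [Hy|Hy].
      + apply H. apply key; auto. intros E. apply Hyw. congruence.
      + apply Hxy. apply key; auto. }
  split; exact Hmm.
Qed.

End Aux.
Arguments term_uniq {C T} _ {A}.

Theorem mainTheorem3 (S Sh : Category) (sigma tau : Functor S Sh)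
    (iota : NatTrans sigma tau) :
  duplicated_category_of_sets iota ->
  forall X : S, mono (iota X).
Proof.
  intros [[[HflS [_ [One [Om [tru Hcl]]]]] [wpS _]] [_ [[[sT [sP sE]] _] [[tT [tP _]] Hfin]]]] X.
  pose proof Hcl as [HOne Hclu].
  destruct HflS as [_ [Hprod Heq]].
  assert (Hfo : finite_obj Om) by (eapply omega_finite; eauto; repeat split; eauto).
  destruct (Hfin Om Hfo) as [eO HiO].
  pose proof (@cast_mono _ _ _ _ _ HiO) as HmO.
  destruct (Hprod X X) as [P [p1 [p2 HP]]].
  destruct (HP X (idm X) (idm X)) as [D [[HD1 HD2] _]].
  assert (HmD : mono D).
  { intros Z a b Hab. rewrite <- (comp_id_l a), <- (comp_id_l b), <- HD1, <- !comp_assoc, Hab.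
    reflexivity. }
  destruct (HOne X) as [tX _].
  destruct (Hclu X P D HmD) as [chi [Hchi _]].
  destruct (HOne P) as [tP' _].
  destruct (Heq P Om chi (tru ∘ tP')) as [E [e [Hee Heu]]].
  assert (Hpe : p1 ∘ e = p2 ∘ e).
  { destruct (Hchi tX) as [_ Hpb].
    destruct (Hpb E e (tP' ∘ e)) as [u [[Hu _] _]].
    - rewrite Hee, comp_assoc. reflexivity.
    - rewrite <- Hu, !comp_assoc, HD1, HD2. reflexivity. }
  intros Z x y Hxy.
  destruct (sP _ _ _ _ _ HP Z x y) as [w [[Hw1 Hw2] _]].
  assert (HiP : iota P ∘ w = Fhom tau D ∘ (iota X ∘ x)).
  { destruct (tP _ _ _ _ _ HP Z (iota X ∘ x) (iota X ∘ x)) as [v [_ Hv]].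
    transitivity v; [symmetry|]; apply Hv; split.
    - rewrite comp_assoc, naturality, <- comp_assoc, Hw1. reflexivity.
    - rewrite comp_assoc, naturality, <- comp_assoc, Hw2. symmetry; exact Hxy.
    - rewrite comp_assoc, <- Fhom_comp, HD1, Fhom_id, comp_id_l. reflexivity.
    - rewrite comp_assoc, <- Fhom_comp, HD2, Fhom_id, comp_id_l. reflexivity. }
  assert (Hsw : Fhom sigma chi ∘ w = Fhom sigma (tru ∘ tP') ∘ w).
  { apply HmO.
    rewrite !comp_assoc, <- !naturality, <- !comp_assoc, HiP, !comp_assoc, <- Fhom_comp.
    destruct (Hchi tX) as [Hsq _]. rewrite Hsq, !Fhom_comp, <- !comp_assoc.
    f_equal. apply (term_uniq (tT One HOne)). }
  destruct (sE _ _ _ _ _ _ (conj Hee Heu)) as [_ HsEu].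
  destruct (HsEu Z w Hsw) as [v [Hv _]].
  rewrite <- Hw1, <- Hw2, <- Hv, !comp_assoc, <- !Fhom_comp, Hpe. reflexivity.
Qed.
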